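(* Let $m\ge3$ be odd, $n\ge 2$, and let $\mathcal{A}$ be a real symmetric $m$th order $n$-dimensional tensor. If $\mathcal{A}$ is strongly positive semi-definite, then $\mathcal{A}$ is genuinely positive semi-definite. If furthermore $\mathcal{A}$ is strongly positive definite, then $\mathcal{A}$ is genuinely positive definite.
   Context: For $\mathbf{x}\in\mathbb{R}^n$, $\mathcal{A}\mathbf{x}^{m-1}$ is the vector with $i$th component $\sum_{i_2,\dots,i_m=1}^n a_{ii_2\dots i_m}x_{i_2}\cdots x_{i_m}$, and $\mathbf{x}^{[m-1]}=(x_i^{m-1})_i$. $\mathcal{A}$ is strongly positive semi-definite if $\mathcal{A}\mathbf{x}^{m-1}\ge\mathbf{0}$ componentwise for all $\mathbf{x}\in\mathbb{R}^n$, and strongly positive definite if $\mathcal{A}\mathbf{x}^{m-1}>\mathbf{0}$ componentwise for all nonzero $\mathbf{x}$. A real $\lambda$ is an H-eigenvalue of $\mathcal{A}$ if there is a nonzero $\mathbf{x}\in\mathbb{R}^n$ with $\mathcal{A}\mathbf{x}^{m-1}=\lambda\mathbf{x}^{[m-1]}$. A tensor is genuinely positive semi-definite (resp. genuinely positive definite) if its symmetrization (here $\mathcal{A}$ itself) has at least one H-eigenvalue and all its H-eigenvalues are nonnegative (resp. positive). *)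

(* Defs.v *)
From mathcomp Require Import all_boot all_order all_fingroup all_algebra.
From mathcomp Require Import reals.
Set Implicit Arguments. Unset Strict Implicit. Unset Printing Implicit Defensive.
Import Order.TTheory GRing.Theory Num.Theory.
Local Open Scope ring_scope.

Definition tensor (R : realType) (m n : nat) := {ffun 'I_m -> 'I_n} -> R.

Definition symmetric_tensor (R : realType) (m n : nat) (A : tensor R m n) :=
  forall (s : {perm 'I_m}) (idx : {ffun 'I_m -> 'I_n}),
    A [ffun k => idx (s k)] = A idx.

(* the multi-index (i, j_1, ..., j_{m-1}) *)
Definition cons_idx (m n : nat) (i : 'I_n) (j : {ffun 'I_m.-1 -> 'I_n})
  : {ffun 'I_m -> 'I_n} :=
  [ffun k : 'I_m => if val k == 0%N then i
   else odflt i (omap j (insub (val k).-1 : option 'I_m.-1))].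

(* (A x^{m-1})_i = sum_{i_2..i_m} a_{i i_2 .. i_m} x_{i_2} ... x_{i_m} *)
Definition tapply (R : realType) (m n : nat) (A : tensor R m n)
  (x : 'I_n -> R) (i : 'I_n) : R :=
  \sum_(j : {ffun 'I_m.-1 -> 'I_n}) A (cons_idx i j) * \prod_(k < m.-1) x (j k).

Definition strongly_psd (R : realType) (m n : nat) (A : tensor R m n) :=
  forall x : 'I_n -> R, forall i, 0 <= tapply A x i.

Definition strongly_pd (R : realType) (m n : nat) (A : tensor R m n) :=
  forall x : 'I_n -> R, (exists i, x i != 0) -> forall i, 0 < tapply A x i.

Definition H_eigenvalue (R : realType) (m n : nat) (A : tensor R m n)
  (lambda : R) :=
  exists x : 'I_n -> R, (exists i, x i != 0) /\
    forall i, tapply A x i = lambda * x i ^+ m.-1.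

(* For a symmetric tensor, its symmetrization is A itself. *)
Definition genuinely_psd (R : realType) (m n : nat) (A : tensor R m n) :=
  (exists lambda, H_eigenvalue A lambda) /\
  (forall lambda, H_eigenvalue A lambda -> 0 <= lambda).

Definition genuinely_pd (R : realType) (m n : nat) (A : tensor R m n) :=
  (exists lambda, H_eigenvalue A lambda) /\
  (forall lambda, H_eigenvalue A lambda -> 0 < lambda).

(* Main.v *)
Require Import Defs.
From mathcomp Require Import all_boot all_order all_fingroup all_algebra.
From mathcomp Require Import reals.
From mathcomp Require Import all_classical all_reals all_analysis.
From mathcomp Require Import ring lra.
Import Order.TTheory GRing.Theory Num.Theory.
Import numFieldNormedType.Exports.
Local Open Scope classical_set_scope.
Local Open Scope ring_scope.

Section S.
Variables (R : realType) (n : nat).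
Implicit Types v w : 'rV[R]_n.

Lemma cont_sum (I : Type) (r : seq I) (f : I -> 'rV[R]_n -> R) v :
  (forall i, {for v, continuous (f i)}) ->
  {for v, continuous (fun w => \sum_(i <- r) f i w)}.
Proof.
move=> fc; elim: r => [|a r IH].
  rewrite (_ : (fun w => _) = fun _ => 0); first exact: cst_continuous.
  by apply/funext=> w; rewrite big_nil.
rewrite (_ : (fun w => _) = (f a + fun w => \sum_(i <- r) f i w)); last first.
  by apply/funext=> w; rewrite big_cons.
exact: continuousD.
Qed.

Lemma cont_prod (I : Type) (r : seq I) (f : I -> 'rV[R]_n -> R) v :
  (forall i, {for v, continuous (f i)}) ->
  {for v, continuous (fun w => \prod_(i <- r) f i w)}.
Proof.
move=> fc; elim: r => [|a r IH].
  rewrite (_ : (fun w => _) = fun _ => 1); first exact: cst_continuous.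
  by apply/funext=> w; rewrite big_nil.
rewrite (_ : (fun w => _) = (f a \* fun w => \prod_(i <- r) f i w)); last first.
  by apply/funext=> w; rewrite big_cons.
exact: continuousM.
Qed.

Definition simplex (x : 'I_n -> R) := (forall i, 0 <= x i) /\ \sum_i x i = 1.

Lemma max_simplex (F G : ('I_n -> R) -> R) : (0 < n)%N ->
  (forall v, {for v, continuous (fun w : 'rV[R]_n => F (fun i => w ord0 i))}) ->
  (forall v, {for v, continuous (fun w : 'rV[R]_n => G (fun i => w ord0 i))}) ->
  (forall x, simplex x -> G x != 0) ->
  exists x, simplex x /\ forall y, simplex y -> F y / G y <= F x / G x.
Proof.
move=> n0 Fc Gc G0.
pose K := [set v : 'rV[R]_n | forall i, `[0, 1]%classic (v ord0 i)] `&`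
          [set v : 'rV[R]_n | \sum_i v ord0 i = 1].
have cK : compact K.
  apply: compact_closedI.
  have := (@rV_compact R n (fun=> `[0, 1]%classic) (fun=> @segment_compact R 0 1)).
  move=> H. exact H.
  have -> : [set v : 'rV[R]_n | \sum_i v ord0 i = 1] =
     (fun v : 'rV[R]_n => \sum_i v ord0 i) @^-1` [set 1] by [].
  have hc : continuous (fun v : 'rV[R]_n => \sum_i v ord0 i).
    move=> v; apply: cont_sum => i; exact: coord_continuous.
  apply: (proj1 (continuous_closedP _) hc). exact: closed_eq.
have KS v : K v -> simplex (fun i => v ord0 i).
  move=> [Kv Sv]; split => // i; have := Kv i; rewrite /= in_itv /=.
  by case/andP.
have [c cK' cmax] : exists2 c, c \in K & forall t, t \in K ->
    F (fun i => t ord0 i) / G (fun i => t ord0 i) <= F (fun i => c ord0 i) / G (fun i => c ord0 i).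
  apply: (compact_EVT_max (f := fun t : 'rV[R]_n => F (fun i => t ord0 i) / G (fun i => t ord0 i))).
  - exists (\row_i (if val i == 0%N then 1 else 0)); split.
      move=> i; rewrite /= mxE; case: ifP => _; rewrite in_itv /= ?ler01 ?lexx //.
    rewrite /= (bigD1 (Ordinal n0)) //= mxE eqxx big1 ?addr0 // => j hj.
    rewrite mxE; case: ifP => // /eqP hj0; case/eqP: hj; exact: val_inj.
  - exact: cK.
  - apply: continuous_in_subspaceT => v /set_mem Kv.
    exact: (continuousM (Fc v) (continuousV (G0 _ (KS _ Kv)) (Gc v))).
exists (fun i => c ord0 i); split; first by apply: KS; exact: set_mem.
move=> y [y0 y1].
have e : (fun i => (\row_i y i) ord0 i) = y by apply/funext=> i; rewrite mxE.
rewrite -e; apply: cmax; apply: mem_set; split.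
  by move=> i; rewrite /= mxE in_itv /= y0 -y1 /= (bigD1 i) //= lerDl sumr_ge0.
by rewrite /=; under eq_bigr do rewrite mxE.
Qed.
End S.


Section P.
Variable R : realType.

Lemma deriv_prod_seq (I : eqType) (r : seq I) (p : I -> {poly R}) : uniq r ->
 (\prod_(i <- r) p i)^`() = \sum_(i <- r) (p i)^`() * \prod_(j <- r | j != i) p j.
Proof.
elim: r => [|a r IH] /=; first by rewrite !big_nil derivC.
case/andP => ar ur; rewrite !big_cons derivM IH // big_distrr /= eqxx /=.
congr (_ + _).
  congr (_ * _); rewrite big_seq_cond [RHS]big_seq_cond; apply: eq_bigl => j.
  case jr: (j \in r) => //=; case: eqP => // ja.
  by rewrite -ja jr in ar.
rewrite big_seq [RHS]big_seq; apply: eq_bigr => i ir.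
have ai : (a != i) by apply/eqP => ai; rewrite ai ir in ar.
by rewrite big_cons ai mulrCA.
Qed.

Lemma poly_bound (P : {poly R}) : exists M, 0 <= M /\
  forall t, `|t| <= 1 -> `|P.[t] - P`_0 - P`_1 * t| <= M * t ^+ 2.
Proof.
exists (\sum_(i < size P) `|P`_i.+2|); split; first by apply: sumr_ge0.
move=> t t1.
rewrite (@horner_coef_wide _ (size P).+2) ?leqW //.
rewrite !big_ord_recl /= expr0 mulr1 expr1 /bump /=.
set S := (X in _ + (_ + X)).
rewrite (_ : _ - _ - _ = S); last by ring.
rewrite /S.
rewrite big_distrl /=; apply: le_trans (ler_norm_sum _ _ _) _.
apply: ler_sum => i _; rewrite normrM -(real_normK (num_real t)); apply: ler_wpM2l => //.
rewrite normrX !exprS mulrA -expr2 expr0 mulr1 -expr2 ler_piMr ?exprn_ge0 //.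
by rewrite exprn_ile1.
Qed.

Lemma lin_nonpos (P : {poly R}) d : 0 < d ->
  (forall t, 0 <= t <= d -> P.[t] <= P.[0]) -> P`_1 <= 0.
Proof.
move=> d0 H; rewrite leNgt; apply/negP => c1.
have [M [M0 HM]] := poly_bound P.
pose t := Order.min (Order.min d 1) (P`_1 / (2 * (M + 1))).
have t0 : 0 < t by rewrite !lt_min d0 ltr01 divr_gt0 // mulr_gt0 // ltr_wpDl.
have td : t <= d by rewrite /t !ge_min lexx.
have t1 : t <= 1 by rewrite /t !ge_min lexx orbT.
have tc : t * (2 * (M + 1)) <= P`_1.
  by rewrite -ler_pdivlMr ?mulr_gt0 ?ltr_wpDl // /t ge_min lexx orbT.
have := H t; rewrite (ltW t0) td horner_coef0 => /(_ isT) Ht.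
have := HM t; rewrite ger0_norm ?(ltW t0) // => /(_ t1) /ler_normlP [h1 _].
nra.
Qed.

Lemma lin_nonneg (P : {poly R}) d : 0 < d ->
  (forall t, 0 <= t <= d -> P.[- t] <= P.[0]) -> 0 <= P`_1.
Proof.
move=> d0 H; rewrite leNgt; apply/negP => c1.
have [M [M0 HM]] := poly_bound P.
pose t := Order.min (Order.min d 1) (- P`_1 / (2 * (M + 1))).
have t0 : 0 < t by rewrite !lt_min d0 ltr01 divr_gt0 ?oppr_gt0 // mulr_gt0 // ltr_wpDl.
have td : t <= d by rewrite /t !ge_min lexx.
have t1 : t <= 1 by rewrite /t !ge_min lexx orbT.
have tc : t * (2 * (M + 1)) <= - P`_1.
  by rewrite -ler_pdivlMr ?mulr_gt0 ?ltr_wpDl // /t ge_min lexx orbT.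
have := H t; rewrite (ltW t0) td horner_coef0 => /(_ isT) Ht.
have := HM (- t); rewrite normrN ger0_norm ?(ltW t0) // sqrrN => /(_ t1) /ler_normlP [h1 _].
nra.
Qed.

Section Tens.
Variables (m n : nat) (A : tensor R m.+1 n).

Definition tail (idx : {ffun 'I_m.+1 -> 'I_n}) : {ffun 'I_m -> 'I_n} :=
  [ffun k => idx (lift ord0 k)].

Lemma cons_lift (j : 'I_n) (jv : {ffun 'I_m -> 'I_n}) (k : 'I_m) :
  @cons_idx m.+1 n j jv (lift ord0 k) = jv k.
Proof.
rewrite ffunE /= add0n insubT ?ltn_ord //= => h.
by congr (jv _); apply: val_inj.
Qed.

Lemma cons0 (j : 'I_n) (jv : {ffun 'I_m -> 'I_n}) : @cons_idx m.+1 n j jv ord0 = j.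
Proof. by rewrite ffunE. Qed.

Lemma tail_cons (j : 'I_n) (jv : {ffun 'I_m -> 'I_n}) : tail (@cons_idx m.+1 n j jv) = jv.
Proof. by apply/ffunP => k; rewrite ffunE cons_lift. Qed.

Lemma cons_tail (j : 'I_n) (idx : {ffun 'I_m.+1 -> 'I_n}) : idx ord0 = j -> @cons_idx m.+1 n j (tail idx) = idx.
Proof.
move=> h; apply/ffunP => l; case: (unliftP ord0 l) => [k ->|->].
  by rewrite cons_lift ffunE.
by rewrite cons0.
Qed.

Lemma prod_lift (x : 'I_n -> R) idx :
  \prod_(l < m.+1 | l != ord0) x (idx l) = \prod_(k < m) x (idx (lift ord0 k)).
Proof.
by rewrite big_mkcond big_ord_recl /= mul1r.
Qed.

Definition Sk (x : 'I_n -> R) j (k : 'I_m.+1) :=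
  \sum_(idx : {ffun 'I_m.+1 -> 'I_n})
     A idx * ((idx k == j)%:R * \prod_(l < m.+1 | l != k) x (idx l)).

Lemma S0 x j : Sk x j ord0 = tapply A x j.
Proof.
rewrite /Sk /tapply.
rewrite (eq_bigr (fun idx : {ffun 'I_m.+1 -> 'I_n} => if idx ord0 == j then
   A idx * \prod_(l < m.+1 | l != ord0) x (idx l) else 0)); last first.
  by move=> idx _; case: eqP => _; rewrite ?mul1r ?mul0r ?mulr0.
rewrite -big_mkcond /=.
rewrite (reindex_onto (cons_idx j) tail); last by move=> idx /eqP; exact: cons_tail.
apply: eq_big => [jv|jv _]; first by rewrite cons0 tail_cons !eqxx.
by rewrite prod_lift; congr (_ * _); apply: eq_bigr => k _; rewrite cons_lift.
Qed.

Lemma Sk_sym x j k : symmetric_tensor A -> Sk x j k = Sk x j ord0.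
Proof.
move=> sA; rewrite /Sk.
pose s := tperm k ord0.
have hinj : injective (fun idx : {ffun 'I_m.+1 -> 'I_n} => [ffun l => idx (s l)]).
  move=> i1 i2 /ffunP h; apply/ffunP => l; have := h (s l).
  by rewrite !ffunE tpermK.
rewrite (reindex_inj hinj); apply: eq_bigr => idx _.
rewrite sA ffunE tpermL; congr (_ * (_ * _)).
rewrite (reindex_inj (@perm_inj _ s)); apply: eq_big => [l|l _].
  by rewrite -(tpermR k ord0) (inj_eq (@perm_inj _ s)).
by rewrite ffunE tpermK.
Qed.

Definition lin (c b : R) : {poly R} := c%:P + b *: 'X.
Lemma lin_eval c b t : (lin c b).[t] = c + b * t.
Proof. by rewrite /lin hornerD hornerC hornerZ hornerX. Qed.
Lemma lin_deriv c b : (lin c b)^`() = b%:P.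
Proof. by rewrite /lin derivD derivC derivZ derivX add0r alg_polyC. Qed.

Lemma coef1E (p : {poly R}) : p`_1 = (p^`()).[0].
Proof. by rewrite horner_coef0 coef_deriv. Qed.

Definition Fm (x : 'I_n -> R) :=
  \sum_(idx : {ffun 'I_m.+1 -> 'I_n}) A idx * \prod_(k < m.+1) x (idx k).
Definition Gm (x : 'I_n -> R) := \sum_i x i ^+ m.+1.
Definition shift (x : 'I_n -> R) j t := fun i => x i + (i == j)%:R * t.

Definition PF (x : 'I_n -> R) (j : 'I_n) : {poly R} := \sum_(idx : {ffun 'I_m.+1 -> 'I_n})
   A idx *: \prod_(k < m.+1) lin (x (idx k)) (idx k == j)%:R.
Definition PG (x : 'I_n -> R) (j : 'I_n) : {poly R} := \sum_i (lin (x i) (i == j)%:R) ^+ m.+1.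

Lemma PF_eval x j t : (PF x j).[t] = Fm (shift x j t).
Proof.
rewrite /PF horner_sum; apply: eq_bigr => idx _.
by rewrite hornerZ horner_prod; congr (_ * _); apply: eq_bigr => k _; rewrite lin_eval.
Qed.

Lemma PG_eval x j t : (PG x j).[t] = Gm (shift x j t).
Proof.
by rewrite /PG horner_sum; apply: eq_bigr => i _; rewrite horner_exp lin_eval.
Qed.

Lemma PF_coef1 x j : symmetric_tensor A -> (PF x j)`_1 = m.+1%:R * tapply A x j.
Proof.
move=> sA; rewrite coef1E /PF (big_morph _ (@derivD R) (@deriv0 R)) horner_sum.
rewrite (eq_bigr (fun idx : {ffun 'I_m.+1 -> 'I_n} => \sum_(k < m.+1)
   A idx * ((idx k == j)%:R * \prod_(l < m.+1 | l != k) x (idx l)))); last first.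
  move=> idx _; rewrite derivZ hornerZ deriv_prod_seq ?index_enum_uniq //.
  rewrite horner_sum big_distrr; apply: eq_bigr => k _.
  rewrite hornerM lin_deriv hornerC horner_prod; congr (_ * (_ * _)).
  by apply: eq_bigr => l _; rewrite lin_eval mulr0 addr0.
rewrite exchange_big /=.
rewrite (eq_bigr (fun _ => tapply A x j)); last by move=> k _; rewrite -/(Sk x j k) Sk_sym // S0.
by rewrite sumr_const card_ord mulr_natl.
Qed.

Lemma PG_coef1 x j : (PG x j)`_1 = m.+1%:R * x j ^+ m.
Proof.
rewrite coef1E /PG (big_morph _ (@derivD R) (@deriv0 R)) horner_sum (bigD1 j) //= big1 ?addr0.
  by rewrite deriv_exp lin_deriv hornerMn hornerM hornerC horner_exp lin_eval eqxx mulr0 addr0 mul1r mulr_natl.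
move=> i /negbTE hij; rewrite deriv_exp lin_deriv hij.
by rewrite hornerMn hornerM hornerC mul0r mul0rn.
Qed.


Lemma sum_shift (x : 'I_n -> R) j t : \sum_i shift x j t i = \sum_i x i + t.
Proof.
rewrite big_split /=; congr (_ + _); rewrite (bigD1 j) //= eqxx mul1r big1 ?addr0 // => i /negbTE ->.
by rewrite mul0r.
Qed.

Lemma shift0 (x : 'I_n -> R) j : shift x j 0 = x.
Proof. by apply/funext => i; rewrite /shift mulr0 addr0. Qed.

Lemma Fm_scale c (y : 'I_n -> R) : Fm (fun i => c * y i) = c ^+ m.+1 * Fm y.
Proof.
rewrite /Fm big_distrr; apply: eq_bigr => idx _.
by rewrite big_split /= prodr_const card_ord mulrCA.
Qed.

Lemma Gm_scale c (y : 'I_n -> R) : Gm (fun i => c * y i) = c ^+ m.+1 * Gm y.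
Proof. by rewrite /Gm big_distrr; apply: eq_bigr => i _; rewrite exprMn. Qed.

Lemma pos_coord (y : 'I_n -> R) : (forall i, 0 <= y i) -> 0 < \sum_i y i ->
  exists i, 0 < y i.
Proof.
move=> y0 s0; case: (boolP [exists i, 0 < y i]) => [/existsP [i hi]|]; first by exists i.
move/existsPn => h; suff : \sum_i y i <= 0 by rewrite leNgt s0.
by apply: sumr_le0 => i _; rewrite leNgt h.
Qed.

Lemma Gm_pos (y : 'I_n -> R) : (forall i, 0 <= y i) -> 0 < \sum_i y i -> 0 < Gm y.
Proof.
move=> y0 s0; have [i hi] := pos_coord _ y0 s0.
rewrite /Gm (bigD1 i) //= ltr_wpDr ?exprn_gt0 //.
by apply: sumr_ge0 => k _; rewrite exprn_ge0.
Qed.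

Lemma Fm_cont v : {for v, continuous (fun w : 'rV[R]_n => Fm (fun i => w ord0 i))}.
Proof.
apply: cont_sum => idx.
have hp : {for v, continuous (fun w : 'rV[R]_n => \prod_(k < m.+1) w ord0 (idx k))}.
  by apply: cont_prod => k; exact: coord_continuous.
have hc : {for v, continuous (fun _ : 'rV[R]_n => A idx)} by exact: cst_continuous.
exact: (continuousM hc hp).
Qed.

Lemma Gm_cont v : {for v, continuous (fun w : 'rV[R]_n => Gm (fun i => w ord0 i))}.
Proof.
rewrite /Gm.
have -> : (fun w : 'rV[R]_n => \sum_i w ord0 i ^+ m.+1) =
   (fun w => \sum_i \prod_(k < m.+1) w ord0 i).
  by apply/funext => w; apply: eq_bigr => i _; rewrite prodr_const card_ord.
apply: cont_sum => i; apply: cont_prod => k; exact: coord_continuous.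
Qed.

Lemma exist_eig : (0 < m)%N -> (0 < n)%N -> symmetric_tensor A -> strongly_psd A ->
  exists lambda, H_eigenvalue A lambda.
Proof.
move=> m0 n0 sA psd.
have GS (x : 'I_n -> R) : @simplex R n x -> Gm x != 0.
  by move=> [x0 x1]; apply: lt0r_neq0; apply: Gm_pos; rewrite ?x1 ?ltr01.
have [c [[c0 c1] cmax]] := @max_simplex R n Fm Gm n0 Fm_cont Gm_cont GS.
pose lam := Fm c / Gm c.
have Gc0 : 0 < Gm c by apply: Gm_pos; rewrite ?c1 ?ltr01.
have H1 y : (forall i, 0 <= y i) -> 0 < \sum_i y i -> Fm y <= lam * Gm y.
  move=> y0 s0; have Gy := Gm_pos _ y0 s0.
  pose z := fun i => (\sum_i y i)^-1 * y i.
  have sz : @simplex R n z.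
    split; first by move=> i; rewrite mulr_ge0 ?invr_ge0 ?(ltW s0).
    by rewrite /z -mulr_sumr mulVf // lt0r_neq0.
  have := cmax z sz; rewrite /z Fm_scale Gm_scale -mulf_div divff ?mul1r.
    by rewrite ler_pdivrMr.
  by rewrite expf_neq0 // invr_eq0 lt0r_neq0.
have hc0 : Fm c - lam * Gm c = 0 by rewrite divfK ?subrr // lt0r_neq0.
have cj1 j : c j <= 1.
  by rewrite -c1 (bigD1 j) //= lerDl sumr_ge0.
have key j : tapply A c j = lam * c j ^+ m.
  pose P := PF c j - lam *: PG c j.
  have PE t : P.[t] = Fm (shift c j t) - lam * Gm (shift c j t).
    by rewrite /P hornerD hornerN hornerZ PF_eval PG_eval.
  have P0 : P.[0] = 0 by rewrite PE shift0.
  have P1 : P`_1 = m.+1%:R * (tapply A c j - lam * c j ^+ m).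
    rewrite /P coefB coefZ PF_coef1 // PG_coef1; ring.
  have m1 : (0 < m.+1%:R :> R) by rewrite ltr0n.
  have le1 : tapply A c j - lam * c j ^+ m <= 0.
    rewrite -(pmulr_rle0 _ m1) -P1; apply: (@lin_nonpos P 1 ltr01) => t /andP [t0 t1].
    rewrite P0 PE subr_le0; apply: H1.
      by move=> i; rewrite /shift addr_ge0 ?mulr_ge0 ?ler0n.
    by rewrite sum_shift c1 ltr_wpDr.
  have [cj0|cjp] := eqVneq (c j) 0.
    apply/eqP; rewrite eq_le; move: le1; rewrite cj0 expr0n eqn0Ngt m0 /= mulr0 subr0 => ->.
    exact: psd.
  have cjpos : 0 < c j by rewrite lt0r cjp c0.
  apply/eqP; rewrite -subr_eq0 eq_le le1 /=.
  rewrite -(pmulr_rge0 _ m1) -P1; apply: (@lin_nonneg P (c j / 2)).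
    by rewrite divr_gt0.
  move=> t /andP [t0 t1]; rewrite P0 PE subr_le0; apply: H1.
    move=> i; rewrite /shift; case: eqP => [->|_]; last by rewrite mul0r addr0.
    by rewrite mul1r; lra.
  by rewrite sum_shift c1; have := cj1 j; lra.
exists lam, c; split; last by move=> i; rewrite key.
have [i hi] : exists i, 0 < c i by apply: pos_coord => //; rewrite c1 ltr01.
by exists i; rewrite gt_eqF.
Qed.

End Tens.
End P.

Theorem theorem3p3 (R : realType) (m n : nat) (A : tensor R m n) :
  (3 <= m)%N -> odd m -> (2 <= n)%N -> symmetric_tensor A ->
  (strongly_psd A -> genuinely_psd A) /\
  (strongly_pd A -> genuinely_pd A).
Proof.
move=> m3 om n2 sA.
have ev : ~~ odd m.-1 by case: (m) om.
have hm1 : (0 < m.-1)%N by case: (m) m3 => [|[|[|k]]].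
have pos_pow (x : 'I_n -> R) i : x i != 0 -> 0 < x i ^+ m.-1.
  by move=> h; rewrite exprn_even_gt0 // h orbT.
have psd_ex : strongly_psd A -> exists l, H_eigenvalue A l.
  move: A sA; case: (m) m3 om hm1 => // k m3 _ hk A0 sA psd.
  apply: exist_eig => //; exact: (leq_trans _ n2).
have nn : strongly_psd A -> forall l, H_eigenvalue A l -> 0 <= l.
  move=> psd l [x [[i xi] hx]]; have := psd x i.
  by rewrite hx pmulr_lge0 //; exact: pos_pow.
have pp : strongly_pd A -> forall l, H_eigenvalue A l -> 0 < l.
  move=> pd l [x [[i xi] hx]]; have := pd x (ex_intro _ i xi) i.
  by rewrite hx pmulr_lgt0 //; exact: pos_pow.
have pdpsd : strongly_pd A -> strongly_psd A.
  move=> pd x i; case: (boolP [exists i, x i != 0]) => [/existsP h|/existsPn h].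
    exact/ltW/pd.
  rewrite /tapply big1 // => jv _.
  rewrite (eq_bigr (fun _ => 0)); last by move=> k _; apply/eqP; rewrite -[_ == _]negbK h.
  by rewrite prodr_const card_ord expr0n eqn0Ngt hm1 mulr0.
split.
  by move=> psd; split; [exact: psd_ex | exact: nn].
by move=> pd; split; [exact: psd_ex (pdpsd pd) | exact: pp].
Qed.
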